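(* Let $P$ be a finite poset, $R$ a commutative unital ring, and $D$ a derivation of $I^3(P,R)$. Then $D(e_x)=0$ for all $x\in P$.
   Context: For a finite poset $P$, $P^3_\le=\{(x,y,z)\in P^3: x\le y\le z\}$, and $I^3(P,R)$ is the $R$-module of functions $f:P^3_\le\to R$ with multiplication $(fg)(x_1,x_2,x_3)=\sum f(x_1,y_1,y_2)g(y_1,y_2,x_3)$ over all $x_1\le y_1\le x_2\le y_2\le x_3$. $e_x\in I^3(P,R)$ is the function equal to $1$ at $(x,x,x)$ and $0$ elsewhere. A derivation is an $R$-linear map $D:I^3(P,R)\to I^3(P,R)$ with $D(fg)=D(f)g+fD(g)$. *)

(* Defs.v *)
From HB Require Import structures.
From mathcomp Require Import all_boot all_order all_algebra.
Set Implicit Arguments. Unset Strict Implicit. Unset Printing Implicit Defensive.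
Import Order.Theory GRing.Theory.
Local Open Scope order_scope.

Definition chain3 (d : Order.disp_t) (P : finPOrderType d) : predArgType :=
  {t : P * P * P | (t.1.1 <= t.1.2) && (t.1.2 <= t.2)}.

Section I3.
Variables (d : Order.disp_t) (P : finPOrderType d) (R : comPzRingType).
Local Open Scope ring_scope.

Definition I3 := {ffun chain3 P -> R}.

(* value of f at (x,y,z); 0 if (x,y,z) is not a chain (never used then) *)
Definition I3val (f : I3) (x y z : P) : R :=
  match (insub (x, y, z) : option (chain3 P)) with
  | Some t => f t | None => 0 end.

Definition I3mul (f g : I3) : I3 :=
  [ffun t : chain3 P =>
     let: (x1, x2, x3) := val t in
     \sum_(y1 : P | ((x1 <= y1) && (y1 <= x2))%O)
       \sum_(y2 : P | ((x2 <= y2) && (y2 <= x3))%O)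
         I3val f x1 y1 y2 * I3val g y1 y2 x3].

Definition I3add (f g : I3) : I3 := [ffun t => f t + g t].
Definition I3scale (r : R) (f : I3) : I3 := [ffun t => r * f t].

Definition I3e (x : P) : I3 := [ffun t => if val t == (x, x, x) then 1 else 0].

Definition is_derivation (D : I3 -> I3) : Prop :=
  [/\ forall f g, D (I3add f g) = I3add (D f) (D g),
      forall r f, D (I3scale r f) = I3scale r (D f)
    & forall f g, D (I3mul f g) = I3add (I3mul (D f) g) (I3mul f (D g))].
End I3.

(* Main.v *)
Require Import Defs.
From mathcomp Require Import all_boot all_order all_algebra.
Set Implicit Arguments. Unset Strict Implicit. Unset Printing Implicit Defensive.
Import Order.Theory GRing.Theory.
Local Open Scope ring_scope.

Definition Ind {d : Order.disp_t} {P : finPOrderType d} (R : comPzRingType) (p q r : P) : I3 P R :=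
  [ffun t => if val t == (p, q, r) then 1 else 0].

Lemma I3val_chain {d} {P : finPOrderType d} {R : comPzRingType} (f : I3 P R) (t : chain3 P) :
  f t = I3val f (val t).1.1 (val t).1.2 (val t).2.
Proof.
case: t => [[[a b] c] Ht] /=; rewrite /I3val; case: insubP => [u _ Hu|].
  by congr (f _); apply: val_inj; rewrite Hu.
by rewrite /= Ht.
Qed.

Lemma I3val_nchain {d} {P : finPOrderType d} {R : comPzRingType} (f : I3 P R) a b c :
  ~~ ((a <= b)%O && (b <= c)%O) -> I3val f a b c = 0.
Proof. by rewrite /I3val; case: insubP => [u -> //|]. Qed.

Lemma I3val_Ind {d} {P : finPOrderType d} {R : comPzRingType} (p q r a b c : P) :
  (p <= q)%O -> (q <= r)%O ->
  I3val (Ind R p q r) a b c = if (a, b, c) == (p, q, r) then 1 else 0.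
Proof.
move=> pq qr; rewrite /I3val; case: insubP => [u _ Hu|H]; first by rewrite ffunE Hu.
case: eqP => // [[ea eb ec]]; move: H; by rewrite /= ea eb ec pq qr.
Qed.

Lemma I3eInd {d} {P : finPOrderType d} {R : comPzRingType} (x : P) : I3e R x = Ind R x x x.
Proof. by []. Qed.

Lemma I3val_add {d} {P : finPOrderType d} {R : comPzRingType} (f g : I3 P R) a b c :
  I3val (I3add f g) a b c = I3val f a b c + I3val g a b c.
Proof. by rewrite /I3val; case: insubP => [u _ _|]; rewrite ?ffunE ?addr0. Qed.

Lemma I3val_mul {d} {P : finPOrderType d} {R : comPzRingType} (f g : I3 P R) x1 x2 x3 :
  (x1 <= x2)%O -> (x2 <= x3)%O ->
  I3val (I3mul f g) x1 x2 x3 =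
     \sum_(y1 : P | ((x1 <= y1) && (y1 <= x2))%O)
       \sum_(y2 : P | ((x2 <= y2) && (y2 <= x3))%O)
         I3val f x1 y1 y2 * I3val g y1 y2 x3.
Proof.
move=> h1 h2; rewrite /I3val; case: insubP => [u _ Hu|]; last by rewrite /= h1 h2.
by rewrite ffunE Hu.
Qed.

Lemma I3val0 {d} {P : finPOrderType d} {R : comPzRingType} a b c :
  I3val ([ffun _ => 0] : I3 P R) a b c = 0.
Proof. by rewrite /I3val; case: insubP => [u _ _|]; rewrite ?ffunE. Qed.

Lemma I3ext {d} {P : finPOrderType d} {R : comPzRingType} (f g : I3 P R) :
  (forall a b c, (a <= b)%O -> (b <= c)%O -> I3val f a b c = I3val g a b c) -> f = g.
Proof.
move=> H; apply/ffunP => t; rewrite !I3val_chain; apply: H;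
by case: t => [[[a b] c]] /= /andP[].
Qed.

Lemma D0 {d} {P : finPOrderType d} {R : comPzRingType} (D : I3 P R -> I3 P R) :
  is_derivation D -> D [ffun _ => 0] = [ffun _ => 0].
Proof.
case=> Hadd _ _.
have := Hadd [ffun _ => 0] [ffun _ => 0].
have -> : I3add [ffun _ => 0] [ffun _ => 0] = [ffun _ => 0] :> I3 P R.
  by apply/ffunP => t; rewrite !ffunE addr0.
move/ffunP => H; apply/ffunP => t; move: (H t); rewrite !ffunE.
move=> E; have := congr1 (fun z => z - (D [ffun _ => 0]) t) E.
by rewrite addrK subrr => <-.
Qed.

Lemma sum2_single {d} {P : finPOrderType d} {R : comPzRingType} (Pr1 Pr2 : pred P) (p q : P)
  (G : P -> P -> R) :
  (forall y1 y2, Pr1 y1 -> Pr2 y2 -> (y1, y2) != (p, q) -> G y1 y2 = 0) ->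
  Pr1 p -> Pr2 q ->
  \sum_(y1 | Pr1 y1) \sum_(y2 | Pr2 y2) G y1 y2 = G p q.
Proof.
move=> H h1 h2; rewrite (bigD1 p) //= [X in _ + X]big1 ?addr0.
  rewrite (bigD1 q) //= [X in _ + X]big1 ?addr0 // => y2 /andP[H2 ne]; apply: H => //.
  by apply: contra ne => /eqP [] *; subst; rewrite eqxx.
move=> y1 /andP[H1 ne]; apply: big1 => y2 H2; apply: H => //.
by apply: contra ne => /eqP [] *; subst; rewrite eqxx.
Qed.

Lemma ee {d} {P : finPOrderType d} {R : comPzRingType} (x : P) :
  I3mul (I3e R x) (I3e R x) = I3e R x.
Proof.
apply: I3ext => a b c ab bc; rewrite I3val_mul // I3eInd I3val_Ind //.
case: eqP => [[-> -> ->]|ne].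
  rewrite (@sum2_single _ _ _ _ _ x x) ?lexx // ?I3val_Ind ?eqxx ?mulr1 //.
  move=> y1 y2 /andP[l1 l2] /andP[l3 l4] ne.
  by rewrite (@le_anti _ _ y1 x) ?l1 ?l2 // (@le_anti _ _ y2 x) ?l3 ?l4 // eqxx in ne *.
apply: big1 => y1 /andP[l1 l2]; apply: big1 => y2 /andP[l3 l4].
rewrite !I3val_Ind //.
case: eqP => [[e1 e2 e3]|]; last by rewrite mul0r.
case: eqP => [[e4 e5 e6]|]; last by rewrite mulr0.
subst; case: ne; congr (_, _, _); apply/le_anti; by rewrite ?l2 ?l3.
Qed.

Unset Implicit Arguments.
Theorem lemma4p3 (d : Order.disp_t) (P : finPOrderType d) (R : comPzRingType)
  (D : I3 P R -> I3 P R) :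
  is_derivation D -> forall x : P, D (I3e R x) = [ffun _ => 0%R].
Proof.
move=> HD x; have HD0 := D0 HD; case: HD => Hadd Hsc Hmul.
set e := I3e R x; set h := D e.
have A : h = I3add (I3mul h e) (I3mul e h) by rewrite /h -Hmul /e ee.
apply: I3ext => a b c ab bc; rewrite I3val0.
have [bx|bx] := eqVneq b x; last first.
  rewrite A I3val_add !I3val_mul // !big1 ?addr0 // => y1 /andP[l1 l2];
  apply: big1 => y2 /andP[l3 l4]; rewrite /e I3eInd I3val_Ind ?lexx //.
  - case: eqP => [[e1 e2 e3]|]; last by rewrite mul0r.
    subst; case/eqP: bx; apply/le_anti; by rewrite ?l2 ?l3.
  - case: eqP => [[e1 e2 e3]|]; last by rewrite mulr0.
    subst; case/eqP: bx; apply/le_anti; by rewrite ?l2 ?l3.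
subst b.
have [ax|ax] := eqVneq a x.
  subst a; have [cx|cx] := eqVneq c x.
    subst c; move: (congr1 (fun f => I3val f x x x) A) => /=.
    rewrite I3val_add !I3val_mul ?lexx //.
    rewrite (@sum2_single _ _ _ _ _ x x (fun y1 y2 => I3val h x y1 y2 * I3val e y1 y2 x)) ?lexx //; last first.
      move=> y1 y2 /andP[l1 l2] /andP[l3 l4] ne.
      by rewrite (@le_anti _ _ y1 x) ?l1 ?l2 // (@le_anti _ _ y2 x) ?l3 ?l4 // eqxx in ne.
    rewrite (@sum2_single _ _ _ _ _ x x (fun y1 y2 => I3val e x y1 y2 * I3val h y1 y2 x)) ?lexx //; last first.
      move=> y1 y2 /andP[l1 l2] /andP[l3 l4] ne.
      by rewrite (@le_anti _ _ y1 x) ?l1 ?l2 // (@le_anti _ _ y2 x) ?l3 ?l4 // eqxx in ne.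
    rewrite /e I3eInd I3val_Ind ?lexx // eqxx mulr1 mul1r => E.
    have := congr1 (fun z => z - I3val h x x x) E.
    by rewrite addrK subrr => <-.
  set G := Ind R x c c.
  have Z : I3mul e G = [ffun _ => 0].
    apply: I3ext => a' b' c' ab' bc'; rewrite I3val0 I3val_mul //.
    apply: big1 => y1 /andP[l1 l2]; apply: big1 => y2 /andP[l3 l4].
    rewrite /e /G I3eInd !I3val_Ind ?lexx //.
    case: eqP => [[e1 e2 e3]|]; last by rewrite mul0r.
    case: eqP => [[e4 e5 e6]|]; last by rewrite mulr0.
    by subst; case/eqP: cx.
  move: (congr1 (fun f => I3val f x c c) (Hmul e G)); rewrite Z HD0 I3val0 I3val_add.
  rewrite !I3val_mul ?lexx //.
  rewrite [X in _ = X + _](@sum2_single _ _ _ _ _ x c (fun y1 y2 => I3val h x y1 y2 * I3val G y1 y2 c)) ?lexx ?bc //; last first.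
    move=> y1 y2 _ _ ne; rewrite /G I3val_Ind ?lexx //.
    case: eqP => [[e1 e2]|]; last by rewrite mulr0.
    by rewrite e1 e2 eqxx in ne.
  rewrite /G I3val_Ind ?lexx // eqxx mulr1 big1 ?addr0 // => y1 _.
  apply: big1 => y2 /andP[l3 l4]; rewrite /e I3eInd I3val_Ind ?lexx //.
  case: eqP => [[e1 e2]|]; last by rewrite mul0r.
  subst; case/eqP: cx; apply/le_anti; by rewrite ?l3 ?l4.
set G := Ind R a a x.
have Z : I3mul G e = [ffun _ => 0].
  apply: I3ext => a' b' c' ab' bc'; rewrite I3val0 I3val_mul //.
  apply: big1 => y1 /andP[l1 l2]; apply: big1 => y2 /andP[l3 l4].
  rewrite /e /G I3eInd !I3val_Ind ?lexx //.
  case: eqP => [[e1 e2 e3]|]; last by rewrite mul0r.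
  case: eqP => [[e4 e5 e6]|]; last by rewrite mulr0.
  by subst; case/eqP: ax.
move: (congr1 (fun f => I3val f a a c) (Hmul G e)); rewrite Z HD0 I3val0 I3val_add.
rewrite !I3val_mul ?lexx ?(le_trans ab bc) //.
rewrite [X in _ = _ + X](@sum2_single _ _ _ _ _ a x (fun y1 y2 => I3val G a y1 y2 * I3val h y1 y2 c)) ?lexx ?ab ?bc //; last first.
  move=> y1 y2 _ _ ne; rewrite /G I3val_Ind ?lexx //.
  case: eqP => [[e1 e2]|]; last by rewrite mul0r.
  by rewrite e1 e2 eqxx in ne.
rewrite /G I3val_Ind ?lexx // eqxx mul1r big1 ?add0r // => y1 /andP[l1 l2].
apply: big1 => y2 _; rewrite /e I3eInd I3val_Ind ?lexx //.
case: eqP => [[e1 e2 e3]|]; last by rewrite mulr0.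
subst; case/eqP: ax; apply/le_anti; by rewrite ?l1 ?l2.
Qed.
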